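(* Consider the protocol with state set $Q=\{L_1,L_2,N\}$ and (symmetric, deterministic) rules $L_1L_2\to L_1N$, $L_2L_1\to NL_1$, $L_1N\to NL_2$, $NL_1\to L_2N$, $L_2N\to NL_1$, $NL_2\to L_1N$, $NN\to NN$, $L_1L_1\to L_2L_2$, $L_2L_2\to L_1L_1$. This protocol is Pavlovian (it is the protocol associated to the payoff matrix with rows (player) and columns (opponent) ordered $L_1,L_2,N$: row $L_1$: $(-3,0,-3)$; row $L_2$: $(-1,-3,-3)$; row $N$: $(-2,-3,0)$), and it solves the leader election problem for populations of size at least $3$: for every $n\ge 3$, every configuration $C_0$ of $n$ agents containing at least one agent in state $L_1$ or $L_2$, and every fair execution starting from $C_0$, there is a time after which every configuration contains exactly one agent in a state of $\{L_1,L_2\}$.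
   Context: A population protocol has a finite state set $Q$ and a transition relation $\delta\subseteq Q^4$; we write $q_1q_2\to q_1'q_2'$ for $(q_1,q_2,q_1',q_2')\in\delta$. A configuration of $n\ge2$ agents is a multiset of $n$ elements of $Q$. We write $C\to C'$ if $C'$ is obtained from $C$ by choosing two of its elements (two distinct agents) in states $q_1,q_2$ and replacing them by $q_1',q_2'$ for some $(q_1,q_2,q_1',q_2')\in\delta$. An execution from $C_0$ is an infinite sequence $C_0,C_1,\dots$ with $C_i\to C_{i+1}$ for all $i$. It is fair if for every configuration $C$ occurring infinitely often and every $C'$ with $C\to C'$, $C'$ also occurs infinitely often. A symmetric game on $Q$ is a real matrix $M=(M_{q,r})_{q,r\in Q}$ ($M_{q,r}$ = payoff of playing $q$ against $r$). For $q',y\in Q$, $BR_{\neq q'}(y)$ is the set of $x\in Q\setminus\{q'\}$ with $M_{z,y}\le M_{x,y}$ for all $z\in Q\setminus\{q'\}$. The transition relation associated to $M$ consists of exactly those $(q_1,q_2,q_1',q_2')$ with: $q_1'=q_1$ if $M_{q_1,q_2}\ge0$, $q_1'\in BR_{\neq q_1}(q_2)$ if $M_{q_1,q_2}<0$; $q_2'=q_2$ if $M_{q_2,q_1}\ge0$, $q_2'\in BR_{\neq q_2}(q_1)$ if $M_{q_2,q_1}<0$. A population protocol is Pavlovian if $\delta$ equals the transition relation associated to some real matrix indexed by $Q\times Q$. *)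

(* Defs.v *)
From HB Require Import structures.
From mathcomp Require Import all_boot all_order all_algebra.
Set Implicit Arguments. Unset Strict Implicit. Unset Printing Implicit Defensive.
Import Order.TTheory GRing.Theory Num.Theory.

(* A transition relation delta ⊆ Q^4; [delta q1 q2 q1' q2'] means q1 q2 -> q1' q2'. *)
Definition trans_rel (Q : finType) := Q -> Q -> Q -> Q -> Prop.

Definition config (Q : finType) := {ffun Q -> nat}.

Definition csize (Q : finType) (C : config Q) : nat := (\sum_(q : Q) C q)%N.

(* C -> C' : two distinct agents in states q1, q2 of C are replaced by q1', q2'. *)
Definition step (Q : finType) (delta : trans_rel Q) (C C' : config Q) : Prop :=
  exists q1 q2 q1' q2' : Q,
    delta q1 q2 q1' q2' /\
    (q1 == q2 -> 2 <= C q1)%N /\ (q1 != q2 -> 1 <= C q1 /\ 1 <= C q2)%N /\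
    C' = [ffun q => (C q - (q == q1) - (q == q2) + (q == q1') + (q == q2'))%N].

Definition execution (Q : finType) (delta : trans_rel Q) (C0 : config Q)
    (e : nat -> config Q) : Prop :=
  e 0%N = C0 /\ forall i, step delta (e i) (e i.+1).

Definition inf_often (Q : finType) (e : nat -> config Q) (C : config Q) : Prop :=
  forall i, exists j, (i <= j)%N /\ e j = C.

Definition fair (Q : finType) (delta : trans_rel Q) (e : nat -> config Q) : Prop :=
  forall C C', inf_often e C -> step delta C C' -> inf_often e C'.

Definition BR (Q : finType) (R : realDomainType) (M : Q -> Q -> R) (q' y x : Q) : Prop :=
  x != q' /\ forall z : Q, z != q' -> (M z y <= M x y)%R.

Definition assoc_rel (Q : finType) (R : realDomainType) (M : Q -> Q -> R) : trans_rel Q :=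
  fun q1 q2 q1' q2' =>
    (if (0 <= M q1 q2)%R then q1' = q1 else BR M q1 q2 q1') /\
    (if (0 <= M q2 q1)%R then q2' = q2 else BR M q2 q1 q2').

Definition pavlovian (Q : finType) (R : realDomainType) (delta : trans_rel Q) : Prop :=
  exists M : Q -> Q -> R, forall q1 q2 q1' q2', delta q1 q2 q1' q2' <-> assoc_rel M q1 q2 q1' q2'.

Inductive st := L1 | L2 | Nn.

Definition st_to_ord (s : st) : 'I_3 :=
  match s with L1 => inord 0 | L2 => inord 1 | Nn => inord 2 end.
Definition ord_to_st (i : 'I_3) : st :=
  match val i with 0 => L1 | 1 => L2 | _ => Nn end.
Lemma st_ordK : cancel st_to_ord ord_to_st.
Proof. by case; rewrite /ord_to_st /= inordK. Qed.

HB.instance Definition _ := Finite.copy st (can_type st_ordK).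

Definition le_delta : trans_rel st :=
  fun q1 q2 q1' q2' =>
    match q1, q2 with
    | L1, L2 => (q1', q2') = (L1, Nn)
    | L2, L1 => (q1', q2') = (Nn, L1)
    | L1, Nn => (q1', q2') = (Nn, L2)
    | Nn, L1 => (q1', q2') = (L2, Nn)
    | L2, Nn => (q1', q2') = (Nn, L1)
    | Nn, L2 => (q1', q2') = (L1, Nn)
    | Nn, Nn => (q1', q2') = (Nn, Nn)
    | L1, L1 => (q1', q2') = (L2, L2)
    | L2, L2 => (q1', q2') = (L1, L1)
    end.

(* The payoff matrix (row = player, column = opponent), order L1, L2, N. *)
Definition le_payoff (R : realDomainType) (q r : st) : R :=
  (match q, r with
  | L1, L1 => - 3%:R | L1, L2 => 0 | L1, Nn => - 3%:R
  | L2, L1 => - 1 | L2, L2 => - 3%:R | L2, Nn => - 3%:R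
  | Nn, L1 => - 2%:R | Nn, L2 => - 3%:R | Nn, Nn => 0
  end)%R.

Definition leaders (C : config st) : nat := (C L1 + C L2)%N.

(* Main.v *)
Require Import Defs.
From HB Require Import structures.
From mathcomp Require Import all_boot all_order all_algebra.
From Stdlib Require Import Lia Classical.
Set Implicit Arguments. Unset Strict Implicit.

Definition steqb (a b : st) : bool :=
  match a, b with L1, L1 | L2, L2 | Nn, Nn => true | _, _ => false end.
Lemma steqE (a b : st) : (a == b) = steqb a b.
Proof. by case: a; case: b => //=; apply/eqP. Qed.

Ltac nlia := intros; simpl in *; repeat match goal with
 | H : is_true (leq _ _) |- _ => let H' := fresh in pose proof (elimT leP H) as H'; clear H end;
 try apply/leP; unfold addn, subn in *; lia.

Lemma sum_st (F : st -> nat) : (\sum_(q : st) F q = F L1 + F L2 + F Nn)%N.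
Proof.
rewrite (bigD1 L1) // (bigD1 L2) ?steqE // (bigD1 Nn) ?steqE // big_pred0 => [|[]];
 rewrite ?steqE //= ?addn0 ?addnA //.
Qed.

Definition tot (C : config st) := (C L1 + C L2 + C Nn)%N.

Lemma step_props C C' : step le_delta C C' ->
  tot C' = tot C /\ (leaders C' <= leaders C)%N /\ ((1 <= leaders C) -> (1 <= leaders C'))%N.
Proof.
move=> [q1 [q2 [q1' [q2' [Hd [H1 [H2 ->]]]]]]]; rewrite /tot /leaders !ffunE !steqE.
move: q1 q2 Hd H1 H2; case; case => /= -[-> ->]; rewrite !steqE /= => H1 H2.
all: repeat match goal with H : is_true true -> _ |- _ => specialize (H isT) | H : is_true false -> _ |- _ => clear H | H : _ /\ _ |- _ => destruct H end.
all: split; [|split]; nlia.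
Qed.

Definition upd (C : config st) q1 q2 q1' q2' : config st :=
  [ffun q => (C q - (q == q1) - (q == q2) + (q == q1') + (q == q2'))%N].

Lemma mkstep (C : config st) q1 q2 q1' q2' : le_delta q1 q2 q1' q2' ->
  (q1 == q2 -> 2 <= C q1)%N -> (q1 != q2 -> 1 <= C q1 /\ 1 <= C q2)%N ->
  step le_delta C (upd C q1 q2 q1' q2').
Proof. by move=> *; exists q1, q2, q1', q2'. Qed.

Lemma path_dec (C : config st) : (2 <= leaders C)%N -> (3 <= tot C)%N ->
  exists C1, step le_delta C C1 /\ ((leaders C1 < leaders C)%N \/
   exists C2, step le_delta C1 C2 /\ ((leaders C2 < leaders C)%N \/
   exists C3, step le_delta C2 C3 /\ (leaders C3 < leaders C)%N)).
Proof.
rewrite /leaders /tot => Hl Ht.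
have [Ha|Ha] := leqP 1 (C L1); have [Hb|Hb] := leqP 1 (C L2).
- exists (upd C L1 L2 L1 Nn); split; first by apply: mkstep; rewrite ?steqE.
  left; rewrite !ffunE !steqE /=; nlia.
- set C1 := upd C L1 L1 L2 L2.
  have S1 : step le_delta C C1 by apply: mkstep; rewrite ?steqE //= => _; nlia.
  exists C1; split => //; right.
  have [Ha3|Ha3] := leqP 3 (C L1).
  + exists (upd C1 L1 L2 L1 Nn); split.
      by apply: mkstep; rewrite ?steqE //= => _; rewrite /C1 !ffunE !steqE /=; split; nlia.
    left; rewrite /C1 !ffunE !steqE /=; nlia.
  + set C2 := upd C1 L2 Nn Nn L1.
    have S2 : step le_delta C1 C2.
      by apply: mkstep; rewrite ?steqE //= => _; rewrite /C1 !ffunE !steqE /=; split; nlia.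
    exists C2; split => //; right.
    exists (upd C2 L1 L2 L1 Nn); split.
      by apply: mkstep; rewrite ?steqE //= => _; rewrite /C2 /C1 !ffunE !steqE /=; split; nlia.
    rewrite /C2 /C1 !ffunE !steqE /=; nlia.
- set C1 := upd C L2 L2 L1 L1.
  have S1 : step le_delta C C1 by apply: mkstep; rewrite ?steqE //= => _; nlia.
  exists C1; split => //; right.
  have [Ha3|Ha3] := leqP 3 (C L2).
  + exists (upd C1 L1 L2 L1 Nn); split.
      by apply: mkstep; rewrite ?steqE //= => _; rewrite /C1 !ffunE !steqE /=; split; nlia.
    left; rewrite /C1 !ffunE !steqE /=; nlia.
  + set C2 := upd C1 L1 Nn Nn L2.
    have S2 : step le_delta C1 C2.
      by apply: mkstep; rewrite ?steqE //= => _; rewrite /C1 !ffunE !steqE /=; split; nlia.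
    exists C2; split => //; right.
    exists (upd C2 L1 L2 L1 Nn); split.
      by apply: mkstep; rewrite ?steqE //= => _; rewrite /C2 /C1 !ffunE !steqE /=; split; nlia.
    rewrite /C2 /C1 !ffunE !steqE /=; nlia.
- exfalso; nlia.
Qed.

Lemma exec_mono (C0 : config st) e : execution le_delta C0 e -> forall i j, (i <= j)%N ->
  [/\ (leaders (e j) <= leaders (e i))%N, tot (e j) = tot (e i) &
      ((1 <= leaders (e i)) -> (1 <= leaders (e j)))%N].
Proof.
move=> [_ Hs] i j /subnK <-; elim: (j - i)%N => [|d [IH1 IH2 IH3]]; first by rewrite add0n.
have [P1 [P2 P3]] := step_props (Hs (d + i)%N).
rewrite addSn; split.
- exact: (leq_trans P2 IH1).
- by rewrite P1 IH2.
- by move=> /IH3 /P3.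
Qed.

Lemma stab (f : nat -> nat) : (forall i j, (i <= j)%N -> (f j <= f i)%N) ->
  exists T, forall t, (T <= t)%N -> f t = f T.
Proof.
move=> Hm.
suff H : forall v T, (f T <= v)%N -> exists T', forall t, (T' <= t)%N -> f t = f T'.
  exact: (H (f 0%N) 0%N (leqnn _)).
elim=> [|v IH] T HT.
  exists T => t Ht; have := Hm _ _ Ht; move: HT; nlia.
case: (classic (forall t, (T <= t)%N -> f t = f T)) => [H|H]; first by exists T.
have [t Ht] : exists t, ~ ((T <= t)%N -> f t = f T).
  by apply: NNPP => Hn; apply: H => t; apply: NNPP => Hc; apply: Hn; exists t.
have Htt : (T <= t)%N by apply: NNPP => Hc; apply: Ht => /Hc.
have Hne : f t <> f T by move=> Hc; apply: Ht.
apply: (IH t); have := Hm _ _ Htt; move: HT Hne; nlia.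
Qed.

Lemma pigeon (T : finType) (f : nat -> T) : exists x, forall i, exists j, (i <= j)%N /\ f j = x.
Proof.
apply: NNPP => Hn.
have Hb : forall x : T, exists i, forall j, (i <= j)%N -> f j <> x.
  move=> x; apply: NNPP => Hx; apply: Hn; exists x => i.
  apply: NNPP => Hi; apply: Hx; exists i => j Hj Hfj; apply: Hi; by exists j.
have : forall s : seq T, exists I, forall x, x \in s -> forall j, (I <= j)%N -> f j <> x.
  elim=> [|y s [I HI]]; first by exists 0%N.
  have [iy Hy] := Hb y.
  exists (maxn I iy) => x; rewrite inE => /orP [/eqP -> | Hx] j Hj.
    by apply: Hy; apply: leq_trans (leq_maxr I iy) Hj.
  by apply: HI => //; apply: leq_trans (leq_maxl I iy) Hj.
move=> /(_ (enum T)) [I HI].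
have Hm : f I \in enum T by rewrite mem_enum.
exact: (HI (f I) Hm I (leqnn I) erefl).
Qed.

Definition key n (C : config st) : 'I_n.+1 * 'I_n.+1 * 'I_n.+1 :=
  (inord (C L1), inord (C L2), inord (C Nn)).

Lemma key_inj n (C D : config st) : tot C = n -> tot D = n -> key n C = key n D -> C = D.
Proof.
rewrite /tot /key => HC HD [E1 E2 E3]; apply/ffunP => -[].
- move/(congr1 (@nat_of_ord _)): E1; rewrite !inordK; nlia.
- move/(congr1 (@nat_of_ord _)): E2; rewrite !inordK; nlia.
- move/(congr1 (@nat_of_ord _)): E3; rewrite !inordK; nlia.
Qed.

Lemma part2 (n : nat) (C0 : config st) (e : nat -> config st) :
     (3 <= n)%N -> csize C0 = n -> (1 <= leaders C0)%N ->
     execution le_delta C0 e -> fair le_delta e ->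
     exists T : nat, forall t : nat, (T <= t)%N -> leaders (e t) = 1%N.
Proof.
move=> Hn Hs Hl Hex Hfair.
have He0 : e 0%N = C0 by case: Hex.
have Htot : forall t, tot (e t) = n.
  move=> t; have [_ -> _] := exec_mono Hex (leq0n t).
  by rewrite He0 /tot -sum_st.
have Hl1 : forall t, (1 <= leaders (e t))%N.
  move=> t; have [_ _ H] := exec_mono Hex (leq0n t); apply: H; by rewrite He0.
have [T HT] := stab (f := fun t => leaders (e t))
  (fun i j Hij => let: And3 h _ _ := exec_mono Hex Hij in h).
exists T => t Ht; rewrite (HT t Ht).
have [Hk|Hk] := leqP (leaders (e T)) 1%N; first by have := Hl1 T; move: Hk; nlia.
exfalso.
have [x Hx] := pigeon (fun j => key n (e j)).
have [j0 [Hj0 Ej0]] := Hx T.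
have Hio : inf_often e (e j0).
  move=> i; have [j [Hj Ej]] := Hx i; exists j; split => //.
  by apply: (key_inj (Htot j) (Htot j0)); rewrite Ej Ej0.
have Hk0 : leaders (e j0) = leaders (e T) by apply: HT.
have Hfin : forall Cf, inf_often e Cf -> (leaders Cf < leaders (e T))%N -> False.
  move=> Cf Hc Hlt; have [j [Hj Ej]] := Hc T.
  by move: Hlt; rewrite -Ej (HT j Hj) ltnn.
have := path_dec (C := e j0); rewrite Hk0 Htot => /(_ Hk Hn).
move=> [C1 [S1 [L1'|[C2 [S2 [L2'|[C3 [S3 L3']]]]]]]].
- exact: (Hfin C1 (Hfair _ _ Hio S1) L1').
- exact: (Hfin C2 (Hfair _ _ (Hfair _ _ Hio S1) S2) L2').
- exact: (Hfin C3 (Hfair _ _ (Hfair _ _ (Hfair _ _ Hio S1) S2) S3) L3').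
Qed.

Import Order.TTheory GRing.Theory Num.Theory.
Local Open Scope ring_scope.
Lemma payoffE (R : realFieldType) q r : le_payoff R q r = (le_payoff int q r)%:~R.
Proof. by case: q; case: r; rewrite /= ?rmorphN ?rmorph0 ?rmorph1 //= ?intz ?mulrz_nat. Qed.
Lemma t (R : realFieldType) : (0 <= - 3%:R :> int) = false.
Proof. by []. Qed.
Lemma t2 : (- 3%:R <= - 1 :> int) = true.
Proof. by []. Qed.
Lemma BR_int (R : realFieldType) a b c :
  BR (@le_payoff R) a b c <-> BR (@le_payoff int) a b c.
Proof.
by split=> -[h1 h2]; split=> // z /h2; rewrite !payoffE ler_int.
Qed.
Lemma assoc_int (R : realFieldType) q1 q2 q1' q2' :
  assoc_rel (@le_payoff R) q1 q2 q1' q2' <-> assoc_rel (@le_payoff int) q1 q2 q1' q2'.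
Proof.
rewrite /assoc_rel !(payoffE R) !ler0z.
by case: ifP; case: ifP; rewrite ?BR_int.
Qed.
Lemma BR_expl a b c :
  BR (@le_payoff int) a b c <-> (~~ steqb c a /\
   [&& steqb L1 a || (le_payoff int L1 b <= le_payoff int c b),
       steqb L2 a || (le_payoff int L2 b <= le_payoff int c b) &
       steqb Nn a || (le_payoff int Nn b <= le_payoff int c b)]).
Proof.
rewrite /BR -steqE; split=> -[h1 h2]; split=> //.
  have h z : (z == a) || (le_payoff int z b <= le_payoff int c b).
    by case: (z =P a) => //= /eqP /h2.
  by rewrite -!steqE !h.
case/and3P: h2; rewrite -!steqE => H1 H2 H3 [] /negbTE Hz; rewrite Hz /= in H1 H2 H3 *; by [].
Qed.
Lemma ifprop (b : bool) (P Q : Prop) : (if b then P else Q) <-> (b /\ P \/ ~~ b /\ Q).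
Proof. by case: b; intuition. Qed.
Lemma part1 (R : realFieldType) q1 q2 q1' q2' :
  le_delta q1 q2 q1' q2' <-> assoc_rel (@le_payoff R) q1 q2 q1' q2'.
Proof.
rewrite assoc_int /assoc_rel !ifprop !BR_expl.
case: q1; case: q2; case: q1'; case: q2' => /=; vm_compute; intuition congruence.
Qed.

Local Close Scope ring_scope.

Theorem mainTheorem5 :
  (forall R : realFieldType,
     pavlovian R le_delta /\
     (forall q1 q2 q1' q2',
        le_delta q1 q2 q1' q2' <-> assoc_rel (@le_payoff R) q1 q2 q1' q2')) /\
  (forall (n : nat) (C0 : config st) (e : nat -> config st),
     (3 <= n)%N -> csize C0 = n -> (1 <= leaders C0)%N ->
     execution le_delta C0 e -> fair le_delta e ->
     exists T : nat, forall t : nat, (T <= t)%N -> leaders (e t) = 1%N).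
Proof.
split; last exact: part2.
move=> R; split; last exact: part1.
by exists (@le_payoff R) => q1 q2 q1' q2'; apply: part1.
Qed.
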